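(* Let $H'=\begin{bmatrix}0\\1\\0\end{bmatrix}$ and $V'=\begin{bmatrix}0&1&0\end{bmatrix}$, and let $\mathcal{C}'=Av_{\mathfrak{P}}(H',V')$. A polyomino $P$ belongs to $\mathcal{C}'$ if and only if every maximal connected set of cells in a row (resp. in a column) of $P$ has a contact with the minimal bounding rectangle of $P$, i.e. contains a cell in the first or last column (resp. in the first or last row) of that rectangle.
   Context: A polyomino is a finite union of unit cells of $\mathbb{Z}\times\mathbb{Z}$ that is connected via edge adjacency, up to translation, identified with the binary matrix of its minimal bounding rectangle (entry $1$ iff the corresponding unit square is a cell). A matrix is a submatrix of another if obtained by deleting rows and/or columns; $Av_{\mathfrak{P}}(\mathcal{M})$ is the set of polyominoes with no submatrix in $\mathcal{M}$. *)

(* Defs.v *)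
From mathcomp Require Import all_boot all_order all_algebra.
Set Implicit Arguments. Unset Strict Implicit. Unset Printing Implicit Defensive.

Definition cell m n (P : 'M[bool]_(m, n)) (c : 'I_m * 'I_n) : bool := P c.1 c.2.

Definition adj_cells m n (P : 'M[bool]_(m, n)) : rel ('I_m * 'I_n) :=
  fun c d => [&& cell P c, cell P d &
     ((c.1 == d.1 :> nat) && ((c.2.+1 == d.2 :> nat) || (d.2.+1 == c.2 :> nat)))
  || ((c.2 == d.2 :> nat) && ((c.1.+1 == d.1 :> nat) || (d.1.+1 == c.1 :> nat)))].

(* P is (the matrix of the minimal bounding rectangle of) a polyomino:
   nonempty, every row and every column of the rectangle contains a cell
   (minimality of the bounding rectangle), and the set of cells is
   connected via edge adjacency. *)
Definition is_polyomino m n (P : 'M[bool]_(m, n)) : Prop :=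
  [/\ 0 < m, 0 < n,
      (forall i : 'I_m, exists j : 'I_n, P i j),
      (forall j : 'I_n, exists i : 'I_m, P i j) &
      (forall c d, cell P c -> cell P d -> connect (adj_cells P) c d)].

Definition submatrix p q m n (A : 'M[bool]_(p, q)) (M : 'M[bool]_(m, n)) : Prop :=
  exists (f : 'I_p -> 'I_m) (g : 'I_q -> 'I_n),
    (forall i i' : 'I_p, i < i' -> f i < f i') /\
    (forall j j' : 'I_q, j < j' -> g j < g j') /\
    (forall i j, A i j = M (f i) (g j)).

Definition avoids p q m n (M : 'M[bool]_(m, n)) (A : 'M[bool]_(p, q)) : Prop :=
  ~ submatrix A M.

Definition Hpat : 'M[bool]_(3, 1) := \matrix_(i < 3, j < 1) (i == 1 :> nat).
Definition Vpat : 'M[bool]_(1, 3) := \matrix_(i < 1, j < 3) (j == 1 :> nat).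

(* entry at natural-number position, false outside the rectangle *)
Definition at_ m n (P : 'M[bool]_(m, n)) (i j : nat) : bool :=
  match @insub _ (fun k => k < m) 'I_m i, @insub _ (fun k => k < n) 'I_n j with
  | Some i', Some j' => P i' j'
  | _, _ => false
  end.

Definition row_segment m n (P : 'M[bool]_(m, n)) (i a b : nat) : Prop :=
  [/\ a <= b, (forall k, a <= k <= b -> at_ P i k),
      (a = 0 \/ ~~ at_ P i a.-1) & ~~ at_ P i b.+1].

Definition col_segment m n (P : 'M[bool]_(m, n)) (j a b : nat) : Prop :=
  [/\ a <= b, (forall k, a <= k <= b -> at_ P k j),
      (a = 0 \/ ~~ at_ P a.-1 j) & ~~ at_ P b.+1 j].

Definition contact_property m n (P : 'M[bool]_(m, n)) : Prop :=
  (forall i a b, row_segment P i a b -> a = 0 \/ b = n.-1) /\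
  (forall j a b, col_segment P j a b -> a = 0 \/ b = m.-1).

(* Main.v *)
Require Import Defs.
From mathcomp Require Import all_boot all_order all_algebra.
Set Implicit Arguments. Unset Strict Implicit. Unset Printing Implicit Defensive.

Lemma at_P m n (P : 'M[bool]_(m, n)) i j (Hi : i < m) (Hj : j < n) :
  at_ P i j = P (Ordinal Hi) (Ordinal Hj).
Proof.
rewrite /at_ (insubT (fun k => k < m) Hi) (insubT (fun k => k < n) Hj) //.
Qed.

Lemma at_lt m n (P : 'M[bool]_(m, n)) i j : at_ P i j -> i < m /\ j < n.
Proof.
rewrite /at_; case: insubP => [i' Hi _|//]; case: insubP => [j' Hj _|//] _.
by [].
Qed.

Lemma at_ord m n (P : 'M[bool]_(m, n)) (i : 'I_m) (j : 'I_n) : at_ P i j = P i j.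
Proof.
rewrite (at_P P (ltn_ord i) (ltn_ord j)); congr (P _ _); exact: val_inj.
Qed.

Lemma down (p : nat -> bool) x : forall y, x < y -> p y -> ~~ p x ->
  exists a, [/\ x < a <= y, (forall k, a <= k <= y -> p k) & ~~ p a.-1].
Proof.
elim=> [//|y IH] hxy py px.
case: (ltnP x y) => [hxy'|hyx].
  case py': (p y).
    have [a [ha hall hna]] := IH hxy' py' px.
    exists a; split => //.
      by case/andP: ha => -> /= h; apply: leq_trans h _.
    move=> k /andP [hak hk]; case: (ltnP y k) => hyk.
      by have -> : k = y.+1 by apply/eqP; rewrite eqn_leq hk hyk.
    by apply: hall; rewrite hak hyk.
  exists y.+1; split => //.
    by rewrite hxy leqnn.
  move=> k hk; by have -> : k = y.+1 by apply/eqP; rewrite eqn_leq andbC.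
  by rewrite /= py'.
have exy : x = y by apply/eqP; rewrite eqn_leq hyx -ltnS hxy.
exists y.+1; split => //.
  by rewrite hxy leqnn.
move=> k hk; by have -> : k = y.+1 by apply/eqP; rewrite eqn_leq andbC.
by rewrite /= -exy.
Qed.

Lemma up (p : nat -> bool) z : forall d y, z - y = d -> y < z -> p y -> ~~ p z ->
  exists b, [/\ y <= b < z, (forall k, y <= k <= b -> p k) & ~~ p b.+1].
Proof.
elim=> [|d IH] y hd hyz py pz.
  by move/eqP: hd; rewrite subn_eq0 leqNgt hyz.
case: (ltnP y.+1 z) => [hyz'|hzy].
  case py': (p y.+1).
    have [b [hb hall hnb]] := IH y.+1 ltac:(by rewrite subnS hd) hyz' py' pz.
    exists b; split => //.
      by case/andP: hb => h ->; rewrite andbT ltnW.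
    move=> k /andP [hyk hkb]; case: (ltnP y k) => hk.
      by apply: hall; rewrite hk hkb.
    by have -> : k = y by apply/eqP; rewrite eqn_leq hk hyk.
  exists y; split => //.
    by rewrite leqnn.
  by move=> k hk; have -> : k = y by apply/eqP; rewrite eqn_leq andbC.
  by rewrite py'.
have ezy : z = y.+1 by apply/eqP; rewrite eqn_leq hzy hyz.
exists y; split => //.
  by rewrite leqnn.
by move=> k hk; have -> : k = y by apply/eqP; rewrite eqn_leq andbC.
by rewrite -ezy.
Qed.

Lemma L1 (p : nat -> bool) N :
  (forall a b, [/\ a <= b, (forall k, a <= k <= b -> p k),
      (a = 0 \/ ~~ p a.-1) & ~~ p b.+1] -> a = 0 \/ b = N.-1) ->
  forall x y z, x < y -> y < z -> z < N -> ~~ p x -> p y -> ~~ p z -> False.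
Proof.
move=> H x y z hxy hyz hzN px py pz.
have [a [/andP [hxa hay] hall1 hna]] := down hxy py px.
have [b [/andP [hyb hbz] hall2 hnb]] := up (erefl (z - y)) hyz py pz.
case: (H a b).
- split => //.
  + exact: leq_trans hay hyb.
  + move=> k /andP [hak hkb]; case: (leqP k y) => hky.
      by apply: hall1; rewrite hak hky.
    by apply: hall2; rewrite ltnW.
  + by right.
- by move=> ha; rewrite ha in hxa.
- move=> hb; move: hbz hzN; rewrite hb; case: N {H hb} => //= N' h1 h2.
  by move: (leq_trans h1 h2); rewrite ltnn.
Qed.

Lemma L2 (p : nat -> bool) N (HN : forall k, p k -> k < N) :
  (forall x y z, x < y -> y < z -> z < N -> ~~ p x -> p y -> ~~ p z -> False) ->
  forall a b, [/\ a <= b, (forall k, a <= k <= b -> p k),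
      (a = 0 \/ ~~ p a.-1) & ~~ p b.+1] -> a = 0 \/ b = N.-1.
Proof.
move=> H a b [hab hall ha hb].
case: ha => [->|ha]; first by left.
case: (eqVneq b N.-1) => [->|hbN]; first by right.
have pb : p b by apply: hall; rewrite hab leqnn.
have pa : p a by apply: hall; rewrite hab leqnn.
have hbN' := HN _ pb.
have ha0 : 0 < a.
  case: (posnP a) => [a0|//]; move: ha pa; rewrite a0 /= => ha pa.
  by rewrite pa in ha.
exfalso; apply: (H a.-1 a b.+1) => //.
- by rewrite prednK.
- move: hbN hbN'; case: N {HN H} => //= N' h1 h2.
  by rewrite ltn_neqAle h1 -ltnS.
Qed.

Theorem proposition18 (m n : nat) (P : 'M[bool]_(m, n)) :
  is_polyomino P ->
  ((avoids P Hpat /\ avoids P Vpat) <-> contact_property P).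
Proof.
move=> _; split.
- move=> [hH hV]; split.
  + move=> i a b seg.
    apply: (L2 (p := at_ P i)) seg; first by move=> k /at_lt [].
    move=> x y z hxy hyz hzN px py pz.
    have [Hi Hy] := at_lt py.
    have Hx : x < n by apply: ltn_trans hxy Hy.
    apply: hV.
    exists (fun _ => Ordinal Hi),
      (fun j : 'I_3 => if val j == 0 then Ordinal Hx
                       else if val j == 1 then Ordinal Hy else Ordinal hzN).
    split; first by move=> [[|?] ?] [[|?] ?].
    split.
      move=> [[|[|[|?]]] ?] [[|[|[|?]]] ?] //= _; exact: ltn_trans hxy hyz.
    move=> i' [[|[|[|?]]] ?] //=; rewrite mxE /= -at_P.
    * by apply/esym/negbTE.
    * by rewrite py.
    * by apply/esym/negbTE.
  + move=> j a b seg.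
    apply: (L2 (p := fun k => at_ P k j)) seg; first by move=> k /at_lt [].
    move=> x y z hxy hyz hzN px py pz.
    have [Hy Hj] := at_lt py.
    have Hx : x < m by apply: ltn_trans hxy Hy.
    apply: hH.
    exists (fun j : 'I_3 => if val j == 0 then Ordinal Hx
                       else if val j == 1 then Ordinal Hy else Ordinal hzN),
      (fun _ => Ordinal Hj).
    split.
      move=> [[|[|[|?]]] ?] [[|[|[|?]]] ?] //= _; exact: ltn_trans hxy hyz.
    split; first by move=> [[|?] ?] [[|?] ?].
    move=> [[|[|[|?]]] ?] j' //=; rewrite mxE /= -at_P.
    * by apply/esym/negbTE.
    * by rewrite py.
    * by apply/esym/negbTE.
- move=> [hr hc]; split.
  + move=> [f [g [hf [hg he]]]].
    pose j0 := g ord0.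
    apply: (L1 (p := fun k => at_ P k j0) (hc j0) (x := f (@Ordinal 3 0 isT))
              (y := f (@Ordinal 3 1 isT)) (z := f (@Ordinal 3 2 isT))).
    * exact: hf.
    * exact: hf.
    * exact: ltn_ord.
    * by rewrite /= at_ord -he mxE.
    * by rewrite /= at_ord -he mxE.
    * by rewrite /= at_ord -he mxE.
  + move=> [f [g [hf [hg he]]]].
    pose i0 := f ord0.
    apply: (L1 (p := fun k => at_ P i0 k) (hr i0) (x := g (@Ordinal 3 0 isT))
              (y := g (@Ordinal 3 1 isT)) (z := g (@Ordinal 3 2 isT))).
    * exact: hg.
    * exact: hg.
    * exact: ltn_ord.
    * by rewrite /= at_ord -he mxE.
    * by rewrite /= at_ord -he mxE.
    * by rewrite /= at_ord -he mxE.
Qed.
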